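(* Let $p$ be a prime and $G=Z_{p^{\lambda_1}}\times\cdots\times Z_{p^{\lambda_n}}$ with $\lambda_1\le\cdots\le\lambda_n$. Every type of $G$ is automorphic to a unique canonical type. Moreover, every canonical type is the maximum type in its automorphism class: if $\mathbf a$ is canonical, then $\mathbf a$ is the maximum element (for the componentwise order) of $\{\mathbf b\in\Lambda(G): T(\mathbf b)\subseteq O(\mathbf a)\}$.
   Context: Set $\lambda_0=0$. Tuples of integers are ordered componentwise: $\mathbf a\le\mathbf b$ iff $a_i\le b_i$ for all $i$. $\Lambda(G)=\{\mathbf a\in\mathbb Z^n:\mathbf 0\le\mathbf a\le(\lambda_1,\dots,\lambda_n)\}$. For $\mathbf a\in\Lambda(G)$, the type $T(\mathbf a)$ is the set of $(g_1,\dots,g_n)\in G$ with $|g_i|=p^{a_i}$ for all $i$; the types partition $G$. Two elements are automorphic if some automorphism of $G$ maps one to the other; each type lies in a single $\mathrm{Aut}(G)$-orbit, and two types are called automorphic if they lie in the same orbit. $O(\mathbf a)$ denotes the $\mathrm{Aut}(G)$-orbit (automorphism class) containing $T(\mathbf a)$. A tuple $\mathbf a\in\Lambda(G)$ (and the type $T(\mathbf a)$) is canonical if (I) $a_i\ge a_{i-1}$ for all $i\in\{2,\dots,n\}$ and (II) $a_{i+1}-a_i\le\lambda_{i+1}-\lambda_i$ for all $i\in\{1,\dots,n-1\}$. *)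

(* Defs.v *)
From mathcomp Require Import all_boot.
Unset Printing Implicit Defensive.

(* Coordinates are 0-indexed: i : 'I_n stands for the paper's index i+1.
   G = Z_{p^lam 0} x ... x Z_{p^lam (n-1)}, an element is a dependent
   finite function g with g i : 'I_(p ^ lam i) (residues mod p^lam i). *)
Definition Gty (p n : nat) (lam : 'I_n -> nat) :=
  {dffun forall i : 'I_n, 'I_(p ^ lam i)}.

Definition has_order (m x k : nat) : Prop :=
  0 < k /\ m %| k * x /\ (forall k', 0 < k' -> m %| k' * x -> k <= k').

Definition inT (p n : nat) (lam : 'I_n -> nat) (a : 'I_n -> nat)
  (g : Gty p n lam) : Prop :=
  forall i : 'I_n, has_order (p ^ lam i) (g i) (p ^ a i).

Definition is_sum (p n : nat) (lam : 'I_n -> nat) (g h k : Gty p n lam) : Prop :=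
  forall i : 'I_n, val (k i) = (val (g i) + val (h i)) %% p ^ lam i.

Definition is_aut (p n : nat) (lam : 'I_n -> nat) (f : Gty p n lam -> Gty p n lam) : Prop :=
  bijective f /\
  forall g h k : Gty p n lam, is_sum p n lam g h k -> is_sum p n lam (f g) (f h) (f k).

Definition inLambda (n : nat) (lam a : 'I_n -> nat) : Prop :=
  forall i : 'I_n, a i <= lam i.

(* canonical tuples; condition (II) a_{i+1}-a_i <= lam_{i+1}-lam_i is written
   additively (equivalent over the integers) *)
Definition canonical (n : nat) (lam a : 'I_n -> nat) : Prop :=
  inLambda n lam a /\
  (forall i j : 'I_n, val j = (val i).+1 -> a i <= a j) /\
  (forall i j : 'I_n, val j = (val i).+1 -> a j + lam i <= lam j + a i).

Definition in_autclass (p n : nat) (lam : 'I_n -> nat) (a : 'I_n -> nat)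
  (g : Gty p n lam) : Prop :=
  exists f, is_aut p n lam f /\ exists h, inT p n lam a h /\ f h = g.

Definition automorphic (p n : nat) (lam a b : 'I_n -> nat) : Prop :=
  exists f : Gty p n lam -> Gty p n lam, is_aut p n lam f /\
  exists g, inT p n lam a g /\ inT p n lam b (f g).

(* Main.v *)
Require Import Defs.
From mathcomp Require Import all_boot zify.

Definition HOd (p L u e : nat) : Prop := forall e', (p ^ L %| p ^ e' * u) = (e <= e').

Lemma dvd_mulmod d c u : (d %| c * (u %% d)) = (d %| c * u).
Proof.
rewrite {2}(divn_eq u d) mulnDr mulnA dvdn_addr //.
by apply: dvdn_mull.
Qed.

Lemma ho_HOd p L u e : prime p -> has_order (p ^ L) u (p ^ e) -> HOd p L u e.
Proof.
move=> pp [k0 [hd hm]] e'; have p1 := prime_gt1 pp; have p0 := prime_gt0 pp.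
apply/idP/idP => H.
- by rewrite -(leq_exp2l _ _ p1); apply: hm => //; rewrite expn_gt0 p0.
- by rewrite -(subnKC H) expnD -mulnA mulnCA dvdn_mull.
Qed.

Lemma HOd_ho p L u e : prime p -> HOd p L u e -> has_order (p ^ L) u (p ^ e).
Proof.
move=> pp H; have p1 := prime_gt1 pp; have p0 := prime_gt0 pp.
split; first by rewrite expn_gt0 p0.
split; first by rewrite H.
move=> k kpos hk.
have hg : p ^ L %| gcdn k (p ^ e) * u by rewrite muln_gcdl dvdn_gcd hk H leqnn.
have hgd : gcdn k (p ^ e) %| p ^ e by exact: dvdn_gcdr.
have [m me hm] := dvdn_pfactor _ _ pp hgd.
move: hg; rewrite hm H => em.
have hme : m = e by apply/eqP; rewrite eqn_leq me em.
apply: dvdn_leq => //; rewrite -hme -hm; exact: dvdn_gcdl.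
Qed.

Lemma HOd_le p L u e : 1 < p -> HOd p L u e -> e <= L.
Proof. by move=> p1 H; rewrite -H dvdn_mulr. Qed.

Lemma HOd_mod p L u e : HOd p L (u %% p ^ L) e <-> HOd p L u e.
Proof. by split=> H e'; rewrite -H dvd_mulmod. Qed.

Lemma HOd_sum p L u v a b : 1 < p -> HOd p L u a -> HOd p L v b -> a < b ->
  HOd p L (u + v) b.
Proof.
move=> p1 Hu Hv ab.
have key : forall e', a <= e' -> (p ^ L %| p ^ e' * (u + v)) = (b <= e').
  by move=> e' ae; rewrite mulnDr dvdn_addr ?Hu // Hv.
move=> e'; case: (leqP a e') => ae; first exact: key.
apply/idP/idP => H; last by exfalso; move: (leq_ltn_trans H ae) ab; lia.
have : p ^ L %| p ^ a * (u + v).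
  by rewrite -(subnK (ltnW ae)) expnD -mulnA dvdn_mull.
by rewrite key // leqNgt ab.
Qed.

Lemma HOd_shift p Ls Lt u a : 1 < p -> HOd p Ls u a ->
  HOd p Lt (p ^ (Lt - Ls) * u) (a - (Ls - Lt)).
Proof.
move=> p1 H e'; have p0 : 0 < p ^ (Ls - Lt) by rewrite expn_gt0; lia.
have p0' : 0 < p ^ (Lt - Ls) by rewrite expn_gt0; lia.
rewrite -(dvdn_pmul2r p0) -expnD.
have -> : Lt + (Ls - Lt) = Ls + (Lt - Ls) by lia.
have -> : p ^ e' * (p ^ (Lt - Ls) * u) * p ^ (Ls - Lt) =
   (p ^ (e' + (Ls - Lt)) * u) * p ^ (Lt - Ls) by rewrite expnD; lia.
by rewrite expnD (dvdn_pmul2r p0') H; lia.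
Qed.

Lemma HOd_pow p L b : 1 < p -> b <= L -> HOd p L (p ^ (L - b)) b.
Proof. by move=> p1 bL e'; rewrite -expnD dvdn_Pexp2l //; lia. Qed.

Lemma HOd_div p L x e k h : 1 < p -> HOd p L x e ->
  (exists y, p ^ k * x == p ^ h * y %[mod p ^ L]) <-> (e <= k \/ h <= L - e + k).
Proof.
move=> p1 H; have eL := @HOd_le p L x e p1 H.
split.
- move=> [y Hy]; case: (leqP e k) => ek; [by left | right].
  case: (leqP h (L - e + k)) => // hl; exfalso.
  have Hm : (p ^ (e - 1 - k) * (p ^ k * x)) %% p ^ L = (p ^ (e - 1 - k) * (p ^ h * y)) %% p ^ L.
    by rewrite -modnMmr (eqP Hy) modnMmr.
  have : (p ^ (e - 1 - k) * (p ^ h * y)) %% p ^ L = 0.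
    apply/eqP; rewrite -/(dvdn _ _) mulnA -expnD.
    by apply: dvdn_mulr; rewrite dvdn_Pexp2l //; lia.
  rewrite -Hm mulnA -expnD => /eqP; rewrite -/(dvdn _ _) H; lia.
- case=> hyp.
  + exists 0; rewrite muln0 mod0n.
    have H' : p ^ L %| p ^ k * x by rewrite H; lia.
    exact: H'.
  + case: (leqP e k) => ek.
      exists 0; rewrite muln0 mod0n.
      have H' : p ^ L %| p ^ k * x by rewrite H; lia.
      exact: H'.
    have : p ^ (L - e) %| x.
      have := H e; rewrite leqnn -{1}(subnKC eL) expnD dvdn_pmul2l //.
      by rewrite expn_gt0; lia.
    move=> /dvdnP [z ->]; exists (p ^ (L - e + k - h) * z).
    have E : p ^ k * (z * p ^ (L - e)) = p ^ h * (p ^ (L - e + k - h) * z).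
      have -> : p ^ k * (z * p ^ (L - e)) = z * p ^ (k + (L - e)) by rewrite expnD; lia.
      have -> : p ^ h * (p ^ (L - e + k - h) * z) = z * p ^ (h + (L - e + k - h)) by rewrite expnD; lia.
      by congr (_ * p ^ _); lia.
    by rewrite E.
Qed.

Set Implicit Arguments. Unset Strict Implicit.

Lemma pexp_gt0 p L : prime p -> 0 < p ^ L.
Proof. by move=> pp; rewrite expn_gt0 prime_gt0. Qed.

Definition mkG p n lam (pp : prime p) (F : 'I_n -> nat) : Gty p n lam :=
  [ffun i => Ordinal (ltn_pmod (F i) (@pexp_gt0 p (lam i) pp))].

Lemma mkGE p n lam pp F i : val (@mkG p n lam pp F i) = F i %% p ^ lam i.
Proof. by rewrite /mkG ffunE. Qed.

Lemma G_eq p n lam (g h : Gty p n lam) : (forall i, val (g i) = val (h i)) -> g = h.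
Proof. by move=> H; apply/ffunP => i; apply: val_inj; rewrite H. Qed.

Lemma is_sum_uniq p n lam (g h k k' : Gty p n lam) :
  is_sum p n lam g h k -> is_sum p n lam g h k' -> k = k'.
Proof. by move=> H1 H2; apply: G_eq => i; rewrite H1 H2. Qed.

Definition addG p n lam pp (g h : Gty p n lam) : Gty p n lam :=
  @mkG p n lam pp (fun i => g i + h i).
Definition zeroG p n lam pp : Gty p n lam := @mkG p n lam pp (fun _ => 0).
Definition smul p n lam pp c (g : Gty p n lam) : Gty p n lam :=
  @mkG p n lam pp (fun i => c * g i).

Arguments addG {p n lam} pp g h.
Arguments zeroG : clear implicits.
Arguments smul {p n lam} pp c g.
Arguments mkG {p n lam} pp F.

Lemma sum_addG p n lam pp (g h : Gty p n lam) : is_sum p n lam g h (addG pp g h).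
Proof. by move=> i; rewrite mkGE. Qed.

Lemma dbl_mod x M : x < M -> x = (x + x) %% M -> x = 0.
Proof.
move=> lt; case: (ltnP (x + x) M) => h.
  by rewrite modn_small //; lia.
have -> : (x + x) %% M = (x + x - M) %% M by rewrite -{1}(subnK h) modnDr.
rewrite modn_small; lia.
Qed.

Lemma aut_zero p n lam pp f : is_aut p n lam f -> f (zeroG p n lam pp) = zeroG p n lam pp.
Proof.
move=> [_ Hf].
have Hz : is_sum p n lam (zeroG p n lam pp) (zeroG p n lam pp) (zeroG p n lam pp).
  by move=> i; rewrite !mkGE !mod0n.
have := Hf _ _ _ Hz; set z := f _ => Hs.
apply: G_eq => i; rewrite mkGE mod0n; have := Hs i.
exact: dbl_mod (ltn_ord (z i)).
Qed.

Lemma smul0 p n lam pp (g : Gty p n lam) : smul pp 0 g = zeroG p n lam pp.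
Proof. by apply: G_eq => i; rewrite !mkGE. Qed.

Lemma smulS p n lam pp c (g : Gty p n lam) :
  is_sum p n lam (smul pp c g) g (smul pp c.+1 g).
Proof. by move=> i; rewrite !mkGE modnDml mulSn addnC. Qed.

Lemma aut_smul p n lam pp f c g : is_aut p n lam f ->
  f (@smul p n lam pp c g) = smul pp c (f g).
Proof.
move=> Ha; elim: c => [|c IH]; first by rewrite !smul0 aut_zero.
have H1 := (proj2 Ha) _ _ _ (smulS pp c g).
rewrite IH in H1; exact: is_sum_uniq H1 (smulS pp c (f g)).
Qed.

Lemma id_aut p n lam : is_aut p n lam id.
Proof. by split => //; exists id. Qed.

Lemma comp_aut p n lam f g : is_aut p n lam f -> is_aut p n lam g -> is_aut p n lam (f \o g).
Proof.
move=> [bf Hf] [bg Hg]; split; first exact: bij_comp.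
by move=> x y z H; apply: Hf; apply: Hg.
Qed.

Lemma inv_aut p n lam (pp : prime p) f : is_aut p n lam f ->
  exists f', is_aut p n lam f' /\ cancel f f'.
Proof.
move=> [[f' c1 c2] Hf]; exists f'; split => //; split; first by exists f.
move=> x y z H.
have Hw := sum_addG pp (f' x) (f' y).
have := Hf _ _ _ Hw; rewrite !c2 => H'.
by rewrite (is_sum_uniq H H') c1.
Qed.

Definition Inv p n lam pp k h (g : Gty p n lam) : Prop :=
  exists y, smul pp (p ^ k) g = smul pp (p ^ h) y.

Lemma Inv_aut p n lam pp k h f g : is_aut p n lam f -> @Inv p n lam pp k h g -> Inv pp k h (f g).
Proof.
move=> Ha [y Hy]; exists (f y).
by rewrite -(@aut_smul _ _ _ pp f (p ^ k) g Ha) -(@aut_smul _ _ _ pp f (p ^ h) y Ha) Hy.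
Qed.

Definition InvT n (lam a : 'I_n -> nat) k h := forall i, a i <= k \/ h <= lam i - a i + k.

Lemma Inv_T p n lam pp a (g : Gty p n lam) k h : inT p n lam a g ->
  (Inv pp k h g <-> InvT lam a k h).
Proof.
move=> Hg; have p1 := prime_gt1 pp.
have Hc : forall i, HOd p (lam i) (g i) (a i) by move=> i; exact: ho_HOd (Hg i).
split.
- move=> [y Hy] i; apply/(@HOd_div p (lam i) (g i) (a i) k h p1 (Hc i)); exists (y i).
  have := congr1 (fun z : Gty p n lam => val (z i)) Hy; rewrite /= !mkGE => ->.
  by [].
- move=> HI.
  have E : forall i, exists Y, p ^ k * g i == p ^ h * Y %[mod p ^ lam i].
    by move=> i; apply/(@HOd_div p (lam i) (g i) (a i) k h p1 (Hc i)); exact: HI.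
  exists (mkG pp (fun i => xchoose (E i))).
  apply: G_eq => i; rewrite !mkGE modnMmr; exact: eqP (xchooseP (E i)).
Qed.

Definition tv p n lam (pp : prime p) (s t : 'I_n) c (x : Gty p n lam) : Gty p n lam :=
  mkG pp (fun k => x k + (k == t) * (c * p ^ (lam t - lam s) * x s)).

Lemma tv_ne p n lam pp s t c x k : k != t -> val (@tv p n lam pp s t c x k) = val (x k).
Proof. by move=> /negbTE kt; rewrite mkGE kt mul0n addn0 modn_small. Qed.

Lemma tv_t p n lam pp s t c x :
  val (@tv p n lam pp s t c x t) = (x t + c * p ^ (lam t - lam s) * x s) %% p ^ lam t.
Proof. by rewrite mkGE eqxx mul1n. Qed.

Lemma modMdvd d C m u : d %| C * m -> C * (u %% m) = C * u %[mod d].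
Proof.
move=> /dvdnP [q hq].
have E : C * u = u %/ m * (C * m) + C * (u %% m).
  by rewrite {1}(divn_eq u m) mulnDr; lia.
by rewrite E hq mulnA modnMDl.
Qed.

Lemma tv_sum p n lam pp s t c (g h k : Gty p n lam) : s != t ->
  is_sum p n lam g h k -> is_sum p n lam (tv pp s t c g) (tv pp s t c h) (tv pp s t c k).
Proof.
move=> st H i; case: (eqVneq i t) => [->|it]; last by rewrite !tv_ne // H.
rewrite !tv_t modnDm H (H s).
have hd : p ^ lam t %| c * p ^ (lam t - lam s) * p ^ lam s.
  by rewrite -mulnA -expnD; apply: dvdn_mull; rewrite dvdn_Pexp2l ?prime_gt1 //; lia.
rewrite -modnDm modMdvd // modnDm modnDml.
congr (_ %% _).
simpl; lia.
Qed.

Lemma mod_cancel_aux M c c' P a b : c + c' = M -> a < M ->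
  ((a + c * P * b) %% M + c' * P * b) %% M = a.
Proof.
move=> E lt; rewrite modnDml.
have -> : a + c * P * b + c' * P * b = (P * b) * M + a by rewrite -E; lia.
by rewrite modnMDl modn_small.
Qed.

Lemma tv_cancel p n lam pp s t c c' : s != t -> c + c' = p ^ lam t ->
  cancel (@tv p n lam pp s t c) (tv pp s t c').
Proof.
move=> st E x; apply: G_eq => i; case: (eqVneq i t) => [->|it]; last by rewrite !tv_ne.
rewrite (@tv_t p n lam pp s t c' (tv pp s t c x)) (@tv_ne p n lam pp s t c x s) //.
rewrite (@tv_t p n lam pp s t c x).
exact: mod_cancel_aux E (ltn_ord _).
Qed.

Lemma tv_aut p n lam pp s t : s != t -> is_aut p n lam (@tv p n lam pp s t 1).
Proof.
move=> st; split; last by move=> g h k; exact: tv_sum.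
have E : 1 + (p ^ lam t - 1) = p ^ lam t by rewrite subnKC // pexp_gt0.
have E' : (p ^ lam t - 1) + 1 = p ^ lam t by rewrite addnC.
exists (tv pp s t (p ^ lam t - 1)); exact: tv_cancel.
Qed.

Definition upd n (a : 'I_n -> nat) (t : 'I_n) b := fun k => if k == t then b else a k.

Lemma tv_type p n lam pp s t a (x : Gty p n lam) : s != t -> inT p n lam a x ->
  a t < a s - (lam s - lam t) ->
  inT p n lam (upd a t (a s - (lam s - lam t))) (tv pp s t 1 x).
Proof.
move=> st Hx lt i; rewrite /upd; case: (eqVneq i t) => [->|it]; last first.
  by move: (Hx i); rewrite /inT tv_ne.
apply: HOd_ho => //; rewrite tv_t; apply/HOd_mod.
have p1 := prime_gt1 pp.
rewrite mul1n; apply: HOd_sum lt => //.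
  exact: ho_HOd (Hx t).
exact: (@HOd_shift _ _ _ _ _ p1 (@ho_HOd _ _ _ _ pp (Hx s))).
Qed.

Lemma exists_canon p n lam (pp : prime p)
  (hlam : forall i j : 'I_n, i <= j -> lam i <= lam j) :
  forall N a, inLambda n lam a -> \sum_i (lam i - a i) < N ->
  forall g : Gty p n lam, inT p n lam a g ->
  exists c f, canonical n lam c /\ is_aut p n lam f /\ inT p n lam c (f g).
Proof.
elim=> // N IH a Ha Hs g Hg.
have step : forall s t : 'I_n, s != t -> a t < a s - (lam s - lam t) ->
    exists c f, canonical n lam c /\ is_aut p n lam f /\ inT p n lam c (f g).
  move=> s t st lt; set b := a s - (lam s - lam t).
  have Ha' : inLambda n lam (upd a t b).
    move=> k; rewrite /upd; case: (eqVneq k t) => [->|kt]; last exact: Ha.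
    by have := Ha s; rewrite /b; lia.
  have Hs' : \sum_i (lam i - upd a t b i) < \sum_i (lam i - a i).
    rewrite (bigD1 t) // [X in _ < X](bigD1 t) //= {1}/upd eqxx.
    have -> : \sum_(i | i != t) (lam i - upd a t b i) = \sum_(i | i != t) (lam i - a i).
      by apply: eq_bigr => k /negbTE kt; rewrite /upd kt.
    rewrite ltn_add2r; have := Ha s; have := Ha t; rewrite /b in lt *; lia.
  have [c [f [Hc [Hf Hfg]]]] := IH _ Ha' (leq_trans Hs' Hs) _ (tv_type pp st Hg lt).
  exists c, (f \o tv pp s t 1); split => //; split => //.
  exact: comp_aut Hf (tv_aut lam pp st).
case: (boolP [exists i : 'I_n, exists j : 'I_n,
   (val j == (val i).+1) && ((a j < a i) || (lam j + a i < a j + lam i))]).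
- case/existsP => i /existsP [j /andP [/eqP ji viol]].
  have lij : lam i <= lam j by apply: hlam; rewrite ji.
  have ij : i != j by apply/eqP => E; move: ji; rewrite E; lia.
  case/orP: viol => v.
  + apply: (step i j ij); lia.
  + apply: (step j i); [by rewrite eq_sym | lia].
- move=> Hn; exists a, id; split; last by split; [exact: id_aut | exact: Hg].
  have H2 : forall i j : 'I_n, val j = (val i).+1 ->
      ~~ ((a j < a i) || (lam j + a i < a j + lam i)).
    move=> i j ji; move/existsPn: Hn => /(_ i) /existsPn /(_ j).
    by rewrite ji eqxx.
  split => //; split => i j ji; have := H2 i j ji; lia.
Qed.

Lemma canon_mono n lam a : canonical n lam a ->
  forall i j : 'I_n, val i <= val j -> a i <= a j /\ a j + lam i <= lam j + a i.
Proof.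
move=> [_ [H1 H2]].
suff : forall d (i j : 'I_n), val j = val i + d -> a i <= a j /\ a j + lam i <= lam j + a i.
  by move=> S i j ij; apply: (S (val j - val i)); rewrite subnKC.
elim=> [|d IH] i j E.
  have -> : j = i by apply: val_inj; rewrite E addn0.
  lia.
have lt : val i + d < n by have := ltn_ord j; rewrite E; lia.
have := IH i (Ordinal lt) erefl.
have := H1 (Ordinal lt) j; have := H2 (Ordinal lt) j => /=.
rewrite E addnS => h2 h1; have := h2 erefl; have := h1 erefl; lia.
Qed.

Lemma canon_max n lam a b : canonical n lam a -> inLambda n lam b ->
  (forall k h, InvT lam a k h -> InvT lam b k h) -> forall j, b j <= a j.
Proof.
move=> Hc Hb H j; case: (leqP (b j) (a j)) => // lt; exfalso.
have := H (a j) (a j + (lam j - b j) + 1).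
have Hl := Hc.1; have := Hb j.
move=> bj.
have : InvT lam a (a j) (a j + (lam j - b j) + 1).
  move=> i; case: (leqP (a i) (a j)) => aij; [by left | right].
  case: (leqP (val j) (val i)) => ji.
    have := (canon_mono Hc ji).2; have := Hl i; lia.
  have := (canon_mono Hc (ltnW ji)).1; lia.
move=> Ha /(_ Ha j); lia.
Qed.

Lemma g0_type p n lam (pp : prime p) a : inLambda n lam a ->
  inT p n lam a (mkG pp (fun i => p ^ (lam i - a i))).
Proof.
move=> Ha i; apply: HOd_ho => //; rewrite mkGE; apply/HOd_mod.
exact: HOd_pow (prime_gt1 pp) (Ha i).
Qed.

Lemma transfer p n lam (pp : prime p) f a b (h : Gty p n lam) :
  is_aut p n lam f -> inT p n lam a h -> inT p n lam b (f h) ->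
  forall k hh, InvT lam a k hh -> InvT lam b k hh.
Proof.
move=> Hf Ha Hb k hh H.
apply/(Inv_T pp k hh Hb); apply: Inv_aut Hf _; exact/(Inv_T pp k hh Ha).
Qed.

Unset Implicit Arguments.
Set Strict Implicit.

Theorem mainTheorem2 (p n : nat) (lam : 'I_n -> nat)
  (hp : prime p)
  (hlam : forall i j : 'I_n, i <= j -> lam i <= lam j) :
  (forall a : 'I_n -> nat, inLambda n lam a ->
     (exists c : 'I_n -> nat, canonical n lam c /\ automorphic p n lam a c) /\
     (forall c1 c2 : 'I_n -> nat,
        canonical n lam c1 -> automorphic p n lam a c1 ->
        canonical n lam c2 -> automorphic p n lam a c2 ->
        forall i, c1 i = c2 i)) /\
  (forall a : 'I_n -> nat, canonical n lam a ->
     (forall g : Gty p n lam, inT p n lam a g -> in_autclass p n lam a g) /\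
     (forall b : 'I_n -> nat, inLambda n lam b ->
        (forall g : Gty p n lam, inT p n lam b g -> in_autclass p n lam a g) ->
        forall i, b i <= a i)).
Proof.
split.
- move=> a Ha; split.
  + have [c [f [Hc [Hf Hfg]]]] :=
      @exists_canon p n lam hp hlam _ a Ha (ltnSn _) _ (g0_type hp Ha).
    by exists c; split => //; exists f; split => //; exists (mkG hp (fun i => p ^ (lam i - a i))); split; [exact: (g0_type hp Ha) | exact: Hfg].
  + move=> c1 c2 Hc1 [f1 [Hf1 [g1 [Hg1 Hfg1]]]] Hc2 [f2 [Hf2 [g2 [Hg2 Hfg2]]]].
    have T : forall c c' (f f' : Gty p n lam -> Gty p n lam) g g',
        is_aut p n lam f -> inT p n lam a g -> inT p n lam c (f g) ->
        is_aut p n lam f' -> inT p n lam a g' -> inT p n lam c' (f' g') ->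
        forall k h, InvT lam c k h -> InvT lam c' k h.
      move=> c c' f f' g g' Hf Hg Hfg Hf' Hg' Hfg' k h H.
      have [fi [Hfi can]] := inv_aut hp Hf.
      have Hfig : inT p n lam a (fi (f g)) by rewrite can.
      have X := transfer hp Hfi Hfg Hfig H.
      have Y := transfer hp Hf' Hg' Hfg' X.
      exact: Y.
    move=> i; apply/eqP; rewrite eqn_leq; apply/andP; split.
    * exact: canon_max Hc2 Hc1.1 (T _ _ _ _ _ _ Hf2 Hg2 Hfg2 Hf1 Hg1 Hfg1) i.
    * exact: canon_max Hc1 Hc2.1 (T _ _ _ _ _ _ Hf1 Hg1 Hfg1 Hf2 Hg2 Hfg2) i.
- move=> a Ha; split.
  + move=> g Hg; exists id; split; first exact: id_aut.
    by exists g.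
  + move=> b Hb H.
    have [f [Hf [h [Hh fh]]]] := H _ (g0_type hp Hb).
    apply: (canon_max Ha Hb) => k hh Hk.
    have Hg0 : inT p n lam b (f h) by rewrite fh; exact: (g0_type hp Hb).
    have Y := transfer hp Hf Hh Hg0 Hk.
    exact: Y.
Qed.
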